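(* Consider the following setting. Let $P\subseteq\mathbb{R}^n$ be a closed convex set, $c:\mathbb{R}^n\to\mathbb{R}$, $A\in\mathbb{R}^{I\times n}$ with rows $A_{i\bullet}$, $\eta\in\mathbb{R}^I$, scalars $\psi_{ij}$ ($i=0,\dots,I$, $j=1,\dots,J_i$) with $\psi_{ij}^\pm=\max(\pm\psi_{ij},0)$, and for each $(i,j)$ $$\phi_{ij}(x) = \max_{1\le k\le K_{ij}}\big[(a_{ij}^k)^\top x + \alpha_{ij}^k\big] + \min_{1\le \ell\le L_{ij}}\big[(b_{ij}^\ell)^\top x + \beta_{ij}^\ell\big].$$ Define $\theta$, $X_{\rm AHS}$, $\theta^\varepsilon$, $X^\varepsilon_{\rm AHS}$ as in the context. Let $\bar x\in X_{\rm AHS}$, and let $\bar\varepsilon>0$ and a neighborhood $\mathcal{N}$ of $\bar x$ be such that for all $i=0,1,\dots,I$, all $j\notin \mathcal{J}^-_{i,0}(\bar x)$, all $\varepsilon\in(0,\bar\varepsilon]$ and all $x\in\mathcal{N}$, $$\psi_{ij}^-\,\mathbf{1}_{(-\varepsilon,\infty)}(\phi_{ij}(x)) = \psi_{ij}^-\,\mathbf{1}_{[0,\infty)}(\phi_{ij}(x)) = \psi_{ij}^-\,\mathbf{1}_{[0,\infty)}(\phi_{ij}(\bar x)).$$ Then: (A) If $\bar x$ is a local maximizer of $\theta$ on $X_{\rm AHS}$, then $\bar x$ is a local maximizer of $\theta^\varepsilon$ on $X^\varepsilon_{\rm AHS}$ for every $\varepsilon\in(0,\bar\varepsilon]$. (B)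 Conversely, if for some $\varepsilon\in(0,\bar\varepsilon]$ the point $\bar x$ is a local maximizer of $\theta^\varepsilon$ on $X^\varepsilon_{\rm AHS}$ and $\bar x$ satisfies the local sign-invariance condition, then $\bar x$ is a local maximizer of $\theta$ on $X_{\rm AHS}$.
   Context: $\mathbf{1}_S$ is the indicator of $S\subseteq\mathbb{R}$. $\theta(x)=c(x)+\sum_{j=1}^{J_0}\psi_{0j}\mathbf{1}_{[0,\infty)}(\phi_{0j}(x))$ and $X_{\rm AHS}=\{x\in P: A_{i\bullet}x+\sum_{j=1}^{J_i}\psi_{ij}\mathbf{1}_{[0,\infty)}(\phi_{ij}(x))\ge\eta_i,\ i=1,\dots,I\}$ (the problem of maximizing $\theta$ over $X_{\rm AHS}$ is the A-HSCOP). For $\varepsilon>0$: $\theta^\varepsilon(x)=c(x)+\sum_{j=1}^{J_0}\psi_{0j}^+\mathbf{1}_{[0,\infty)}(\phi_{0j}(x))-\sum_{j=1}^{J_0}\psi_{0j}^-\mathbf{1}_{(-\varepsilon,\infty)}(\phi_{0j}(x))$ and $X^\varepsilon_{\rm AHS}=\{x\in P: A_{i\bullet}x+\sum_{j}\psi_{ij}^+\mathbf{1}_{[0,\infty)}(\phi_{ij}(x))-\sum_j\psi_{ij}^-\mathbf{1}_{(-\varepsilon,\infty)}(\phi_{ij}(x))\ge\eta_i,\ i=1,\dots,I\}$. A local maximizer of a function $f$ on a set $X$ is a point $\bar x\in X$ for which there is a neighborhood $\mathcal{N}$ of $\bar x$ with $f(\bar x)\ge f(x)$ for all $x\in X\cap\mathcal{N}$.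 For $i=0,\dots,I$, $\mathcal{J}^-_{i,0}(\bar x)=\{j\in\{1,\dots,J_i\}:\psi_{ij}<0,\ \phi_{ij}(\bar x)=0\}$. The point $\bar x$ satisfies the local sign-invariance (LSI) condition if for every $i=0,1,\dots,I$ and every $j\in\mathcal{J}^-_{i,0}(\bar x)$, $\phi_{ij}$ is nonnegative on some neighborhood of $\bar x$. *)

(* Defs.v *)
From HB Require Import structures.
From mathcomp Require Import all_boot all_order all_algebra.
From mathcomp Require Import all_classical all_reals all_analysis.
Set Implicit Arguments. Unset Strict Implicit. Unset Printing Implicit Defensive.
Import Order.TTheory GRing.Theory Num.Theory.
Import numFieldNormedType.Exports.
Local Open Scope classical_set_scope.
Local Open Scope ring_scope.

Section Defs.
Variable R : realType.
Variable n : nat.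

Definition dotv (a x : 'cV[R]_n) : R := (a^T *m x) 0 0.

Definition pl_max (K : nat) (a : 'I_K.+1 -> 'cV[R]_n) (al : 'I_K.+1 -> R)
  (x : 'cV[R]_n) : R :=
  \big[Num.max/(dotv (a ord0) x + al ord0)]_(k < K.+1) (dotv (a k) x + al k).

Definition pl_min (L : nat) (b : 'I_L.+1 -> 'cV[R]_n) (be : 'I_L.+1 -> R)
  (x : 'cV[R]_n) : R :=
  \big[Num.min/(dotv (b ord0) x + be ord0)]_(l < L.+1) (dotv (b l) x + be l).

Definition ind_ge0 (t : R) : R := if 0 <= t then 1 else 0.
Definition ind_gtN (e t : R) : R := if - e < t then 1 else 0.

Definition posp (t : R) : R := Num.max t 0.
Definition negp (t : R) : R := Num.max (- t) 0.

(* Data: I constraints; index i : 'I_I.+1 with i = ord0 the objective,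
   i = lift ord0 i' (i' : 'I_I) the constraint i'+1. *)
Variable I : nat.
Variable J : 'I_I.+1 -> nat.
Variable psi : forall i : 'I_I.+1, 'I_(J i) -> R.
Variable phi : forall i : 'I_I.+1, 'I_(J i) -> 'cV[R]_n -> R.

Definition ci (i' : 'I_I) : 'I_I.+1 := lift ord0 i'.

Definition theta (c : 'cV[R]_n -> R) (x : 'cV[R]_n) : R :=
  c x + \sum_(j < J ord0) psi j * ind_ge0 (phi j x).

Definition X_AHS (P : set 'cV[R]_n) (A : 'M[R]_(I, n)) (eta : 'cV[R]_I)
  : set 'cV[R]_n :=
  [set x | P x /\ forall i' : 'I_I,
      eta i' 0 <= (A *m x) i' 0
                  + \sum_(j < J (ci i')) psi j * ind_ge0 (phi j x)].

Definition theta_eps (e : R) (c : 'cV[R]_n -> R) (x : 'cV[R]_n) : R :=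
  c x + \sum_(j < J ord0) posp (psi j) * ind_ge0 (phi j x)
      - \sum_(j < J ord0) negp (psi j) * ind_gtN e (phi j x).

Definition X_AHS_eps (e : R) (P : set 'cV[R]_n) (A : 'M[R]_(I, n))
  (eta : 'cV[R]_I) : set 'cV[R]_n :=
  [set x | P x /\ forall i' : 'I_I,
      eta i' 0 <= (A *m x) i' 0
                  + \sum_(j < J (ci i')) posp (psi j) * ind_ge0 (phi j x)
                  - \sum_(j < J (ci i')) negp (psi j) * ind_gtN e (phi j x)].

Definition Jminus0 (xbar : 'cV[R]_n) (i : 'I_I.+1) (j : 'I_(J i)) : Prop :=
  psi j < 0 /\ phi j xbar = 0.

Definition LSI (xbar : 'cV[R]_n) : Prop :=
  forall (i : 'I_I.+1) (j : 'I_(J i)), Jminus0 xbar j ->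
    exists N : set 'cV[R]_n, nbhs xbar N /\ (forall x, N x -> 0 <= phi j x).

End Defs.

Definition local_max (R : realType) (n : nat) (f : 'cV[R]_n -> R)
  (X : set 'cV[R]_n) (xbar : 'cV[R]_n) : Prop :=
  X xbar /\ exists N : set 'cV[R]_n, nbhs xbar N /\
     (forall x, X x -> N x -> (f x <= f xbar)%R).

Definition convex_in (R : realType) (n : nat) (P : set 'cV[R]_n) : Prop :=
  forall x y (t : R), (0 <= t)%R -> (t <= 1)%R -> P x -> P y ->
    P (t *: x + (1 - t) *: y)%R.

(* phi_ij(x) = max_k [(a_ij^k)^T x + alpha_ij^k] + min_l [(b_ij^l)^T x + beta_ij^l],
   with K_ij = (K i j).+1 >= 1 and L_ij = (L i j).+1 >= 1 pieces *)
Definition phiPL (R : realType) (n I : nat) (J : 'I_I.+1 -> nat)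
  (K L : forall i : 'I_I.+1, 'I_(J i) -> nat)
  (a : forall (i : 'I_I.+1) (j : 'I_(J i)), 'I_(K i j).+1 -> 'cV[R]_n)
  (alpha : forall (i : 'I_I.+1) (j : 'I_(J i)), 'I_(K i j).+1 -> R)
  (b : forall (i : 'I_I.+1) (j : 'I_(J i)), 'I_(L i j).+1 -> 'cV[R]_n)
  (beta : forall (i : 'I_I.+1) (j : 'I_(J i)), 'I_(L i j).+1 -> R)
  (i : 'I_I.+1) (j : 'I_(J i)) (x : 'cV[R]_n) : R :=
  (pl_max (a i j) (alpha i j) x + pl_min (b i j) (beta i j) x)%R.

(* Main.v *)
Require Import Defs.
From HB Require Import structures.
From mathcomp Require Import all_boot all_order all_algebra.
From mathcomp Require Import all_classical all_reals all_analysis.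
From mathcomp Require Import lra.
Import Order.TTheory GRing.Theory Num.Theory.
Import numFieldNormedType.Exports.
Local Open Scope classical_set_scope.
Local Open Scope ring_scope.

Section Aux.
Variable R : realType.

Lemma posp_negp (t : R) : posp t - negp t = t.
Proof.
rewrite /posp /negp; have [h|h] := leP 0 t; have [h2|h2] := leP 0 (-t); lra.
Qed.

Lemma negp_ge0 (t : R) : 0 <= negp t.
Proof. by rewrite /negp le_max lexx orbT. Qed.

Lemma ind_le (e t : R) : 0 < e -> ind_ge0 t <= ind_gtN e t.
Proof.
move=> he; rewrite /ind_ge0 /ind_gtN; case: ifP => h.
  have -> : - e < t by apply: (lt_le_trans _ h); rewrite oppr_lt0.
  by [].
by case: ifP.
Qed.

Lemma sum_le m (p f : 'I_m -> R) (e : R) : 0 < e ->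
  \sum_(j < m) posp (p j) * ind_ge0 (f j) - \sum_(j < m) negp (p j) * ind_gtN e (f j)
  <= \sum_(j < m) p j * ind_ge0 (f j).
Proof.
move=> he.
have -> : \sum_(j < m) p j * ind_ge0 (f j) =
  \sum_(j < m) posp (p j) * ind_ge0 (f j) - \sum_(j < m) negp (p j) * ind_ge0 (f j).
  rewrite -sumrB; apply: eq_bigr => j _; by rewrite -mulrBl posp_negp.
rewrite lerD2l lerN2; apply: ler_sum => j _.
by apply: ler_wpM2l; [exact: negp_ge0 | exact: ind_le].
Qed.

Lemma sum_eq m (p f : 'I_m -> R) (e : R) :
  (forall j, negp (p j) * ind_gtN e (f j) = negp (p j) * ind_ge0 (f j)) ->
  \sum_(j < m) posp (p j) * ind_ge0 (f j) - \sum_(j < m) negp (p j) * ind_gtN e (f j)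
  = \sum_(j < m) p j * ind_ge0 (f j).
Proof.
move=> H; rewrite -sumrB; apply: eq_bigr => j _.
by rewrite H -mulrBl posp_negp.
Qed.
End Aux.

Theorem proposition3 (R : realType) (n : nat) (P : set 'cV[R]_n)
  (hPcl : closed P) (hPcv : convex_in P)
  (c : 'cV[R]_n -> R) (I : nat) (A : 'M[R]_(I, n)) (eta : 'cV[R]_I)
  (J : 'I_I.+1 -> nat) (psi : forall i : 'I_I.+1, 'I_(J i) -> R)
  (K L : forall i : 'I_I.+1, 'I_(J i) -> nat)
  (a : forall (i : 'I_I.+1) (j : 'I_(J i)), 'I_(K i j).+1 -> 'cV[R]_n)
  (alpha : forall (i : 'I_I.+1) (j : 'I_(J i)), 'I_(K i j).+1 -> R)
  (b : forall (i : 'I_I.+1) (j : 'I_(J i)), 'I_(L i j).+1 -> 'cV[R]_n)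
  (beta : forall (i : 'I_I.+1) (j : 'I_(J i)), 'I_(L i j).+1 -> R)
  (xbar : 'cV[R]_n) (epsbar : R) (N : set 'cV[R]_n) :
  let phi := phiPL a alpha b beta in
  X_AHS psi phi P A eta xbar ->
  0 < epsbar ->
  nbhs xbar N ->
  (forall (i : 'I_I.+1) (j : 'I_(J i)), ~ Jminus0 psi phi xbar j ->
     forall eps : R, 0 < eps -> eps <= epsbar ->
     forall x, N x ->
       negp (psi i j) * ind_gtN eps (phi i j x)
         = negp (psi i j) * ind_ge0 (phi i j x) /\
       negp (psi i j) * ind_ge0 (phi i j x)
         = negp (psi i j) * ind_ge0 (phi i j xbar)) ->
  (local_max (theta psi phi c) (X_AHS psi phi P A eta) xbar ->
     forall eps : R, 0 < eps -> eps <= epsbar ->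
       local_max (theta_eps psi phi eps c) (X_AHS_eps psi phi eps P A eta) xbar)
  /\
  (forall eps : R, 0 < eps -> eps <= epsbar ->
     local_max (theta_eps psi phi eps c) (X_AHS_eps psi phi eps P A eta) xbar ->
     LSI psi phi xbar ->
     local_max (theta psi phi c) (X_AHS psi phi P A eta) xbar).
Proof.
move=> phi HX heps HN Hloc.
pose Q e x := forall i j, negp (psi i j) * ind_gtN e (phi i j x)
                          = negp (psi i j) * ind_ge0 (phi i j x).
have F1 e x : 0 < e -> theta_eps psi phi e c x <= theta psi phi c x.
  by move=> he; rewrite /theta_eps /theta -addrA lerD2l; exact: sum_le.
have F2 e x : 0 < e -> X_AHS_eps psi phi e P A eta x -> X_AHS psi phi P A eta x.
  move=> he [HP Hc]; split => // i'; apply: (le_trans (Hc i')).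
  by rewrite -addrA lerD2l; exact: sum_le.
have F3 e x : Q e x -> theta_eps psi phi e c x = theta psi phi c x.
  by move=> HQ; rewrite /theta_eps /theta -addrA; congr (_ + _); apply: sum_eq.
have F4 e x : Q e x -> X_AHS psi phi P A eta x -> X_AHS_eps psi phi e P A eta x.
  move=> HQ [HP Hc]; split => // i'; rewrite -addrA sum_eq //; exact: Hc.
have Nx : N xbar by exact: nbhs_singleton.
have F5 e : 0 < e -> e <= epsbar -> Q e xbar.
  move=> he hle i j; have [Hj|Hj] := pselect (Jminus0 psi phi xbar j).
    case: Hj => _ H0; rewrite /ind_gtN /ind_ge0 H0 lexx oppr_lt0 he //.
  by case: (Hloc i j Hj e he hle xbar Nx).
have F6 e : 0 < e -> e <= epsbar -> LSI psi phi xbar -> \forall x \near xbar, Q e x.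
  move=> he hle HL.
  apply: (@filter_forall _ _ (fun i x => forall j : 'I_(J i), negp (psi i j) * ind_gtN e (phi i j x)
                          = negp (psi i j) * ind_ge0 (phi i j x)) (nbhs xbar) _) => i.
  apply: (@filter_forall _ _ (fun j x => negp (psi i j) * ind_gtN e (phi i j x)
                          = negp (psi i j) * ind_ge0 (phi i j x)) (nbhs xbar) _) => j.
  have [Hj|Hj] := pselect (Jminus0 psi phi xbar j).
    have [N' [HN' HN'p]] := HL i j Hj.
    apply: filterS HN' => x /HN'p h.
    have h' : - e < phi i j x by apply: (lt_le_trans _ h); rewrite oppr_lt0.
    by rewrite /ind_gtN /ind_ge0 h h'.
  by apply: filterS HN => x Nx'; case: (Hloc i j Hj e he hle x Nx').
split.
  move=> [_ [N0 [HN0 Hmax]]] e he hle.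
  split; first exact: F4 e xbar (F5 e he hle) HX.
  exists N0; split => // x Hx HN0x.
  rewrite (F3 e _ (F5 e he hle)); apply: le_trans (F1 e x he) _.
  exact: Hmax x (F2 e x he Hx) HN0x.
move=> e he hle [_ [N0 [HN0 Hmax]]] HL.
split => //.
exists (N0 `&` [set x | Q e x]); split.
  by apply: filterI => //; exact: F6.
move=> x Hx [HN0x HQx].
rewrite -(F3 e _ HQx) -(F3 e _ (F5 e he hle)).
exact: Hmax x (F4 e x HQx Hx) HN0x.
Qed.
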